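(* We have \[ n_q(k,s)=\sum_{i=1}^{s} q^{(s-i)(k-i-s+1)}\genfrac{[}{]}{0pt}{}{s-1}{i-1}_q\genfrac{[}{]}{0pt}{}{k-s}{i}_q. \]
   Context: $q$ is a prime power. For a $(k - s)$-dimensional affine subspace $H$ of $\mathbb{F}_q^k$ not passing through the origin, $n_q(k,s)$ denotes the number of $s$-dimensional affine subspaces through the origin that are disjoint from $H$ (this is independent of the choice of $H$). For integers $0 \leq s \leq k$, the $q$-binomial (Gaussian) coefficient is $\genfrac{[}{]}{0pt}{}{k}{s}_q = \frac{(q^k - 1) \cdots (q^{k - s+ 1} - 1)}{(q^s - 1) \cdots (q - 1)}$ (empty product equal to $1$), and it is defined to be $0$ for other values of $s,k$. *)

(* Defs.v *)
From HB Require Import structures.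
From mathcomp Require Import all_boot all_order all_algebra all_field.
Set Implicit Arguments. Unset Strict Implicit. Unset Printing Implicit Defensive.
Import GRing.Theory.

Definition qbinom (q k s : nat) : nat :=
  if s <= k then
    (\prod_(i < s) (q ^ (k - i) - 1)) %/ (\prod_(i < s) (q ^ i.+1 - 1))
  else 0.

Definition is_lin_subspace (F : finFieldType) (k : nat) (S : {set 'rV[F]_k}) : bool :=
  ((0 : 'rV[F]_k)%R \in S) &&
  [forall u in S, forall v in S, forall c : F, (c *: u + v)%R \in S].

Definition set_dim (F : finFieldType) (k : nat) (S : {set 'rV[F]_k}) : nat :=
  \dim <<enum S>>%VS.

Definition affine_set (F : finFieldType) (k : nat) (a : 'rV[F]_k)
  (V : {vspace 'rV[F]_k}) : {set 'rV[F]_k} :=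
  [set x | (x - a)%R \in V].

(* n_q(k,s) relative to the affine subspace H = a + V:
   number of s-dimensional linear subspaces disjoint from H. *)
Definition n_count (F : finFieldType) (k s : nat) (a : 'rV[F]_k)
  (V : {vspace 'rV[F]_k}) : nat :=
  #|[set S : {set 'rV[F]_k} | is_lin_subspace S && (set_dim S == s)
        && [disjoint S & affine_set a V]]|.

(* Main.v *)
Require Import Defs.
From mathcomp Require Import all_boot all_order all_algebra all_field.
From mathcomp Require Import zify ring.
Set Implicit Arguments. Unset Strict Implicit. Unset Printing Implicit Defensive.

Section QArith.
Variable q : nat.
Hypothesis q_gt1 : 1 < q.

Definition Pf n m := \prod_(t < m) (q ^ (n - t) - 1).
Definition Qf d m := \prod_(t < m) q ^ (d + t).
Definition Lf n d m := \prod_(t < m) (q ^ n - q ^ (d + t)).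

Fixpoint qb n m := match n, m with
 | 0, 0 => 1
 | 0, _.+1 => 0
 | _.+1, 0 => 1
 | n'.+1, m'.+1 => qb n' m' + q ^ m'.+1 * qb n' m'.+1
 end.

Lemma expq_gt0 e : 0 < q ^ e.
Proof. by rewrite expn_gt0; case: q q_gt1. Qed.

Lemma Pf_recl n m : Pf n.+1 m.+1 = (q ^ n.+1 - 1) * Pf n m.
Proof. by rewrite /Pf big_ord_recl subn0; congr (_ * _); apply: eq_bigr => i _. Qed.

Lemma Pf_recr n m : Pf n m.+1 = Pf n m * (q ^ (n - m) - 1).
Proof. by rewrite /Pf big_ord_recr. Qed.

Lemma Pf_gt0 n m : m <= n -> 0 < Pf n m.
Proof.
move=> mn; rewrite /Pf; apply/prodn_gt0 => i.
rewrite subn_gt0 -{1}(expn0 q) ltn_exp2l //; have := ltn_ord i; lia.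
Qed.

Lemma Pf_eq0 n m : n < m -> Pf n m = 0.
Proof.
move=> nm; rewrite /Pf (bigD1 (Ordinal nm)) //= subnn expn0 subnn; by [].
Qed.

Lemma qbP n m : qb n m * Pf m m = Pf n m.
Proof.
elim: n m => [|n IH] [|m] /=; rewrite ?mul1n ?mul0n //.
- by rewrite Pf_eq0.
- by rewrite /Pf !big_ord0.
rewrite mulnDl -mulnA IH [Pf m.+1 m.+1]Pf_recl mulnCA IH.
rewrite [Pf n.+1 m.+1]Pf_recl [Pf n m.+1]Pf_recr (mulnC (Pf n m)) mulnA -mulnDl.
case: (leqP m n) => mn; last by rewrite (Pf_eq0 mn) !muln0.
congr (_ * _).
have -> : q ^ n.+1 = q ^ m.+1 * q ^ (n - m) by rewrite -expnD; congr (_ ^ _); lia.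
have h1 := expq_gt0 m.+1; have h2 := expq_gt0 (n - m).
rewrite mulnBr muln1; set A := q ^ m.+1; set C := q ^ (n - m).
have : A <= A * C by rewrite leq_pmulr.
move: h1; rewrite -/A; lia.
Qed.

Lemma qb_eq0 n m : n < m -> qb n m = 0.
Proof.
move=> nm; have := qbP n m; rewrite (Pf_eq0 nm) => /eqP.
by rewrite muln_eq0 (gtn_eqF (Pf_gt0 (leqnn m))) orbF => /eqP.
Qed.

Lemma Pf_split n a b : Pf n (a + b) = Pf n a * Pf (n - a) b.
Proof.
rewrite /Pf big_split_ord /=; congr (_ * _); apply: eq_bigr => i _.
by rewrite subnDA.
Qed.

Lemma qbP2 n m : m <= n -> qb n m * Pf (n - m) (n - m) = Pf n (n - m).
Proof.
move=> mn.
have h : Pf n n = Pf n m * Pf (n - m) (n - m) by rewrite -Pf_split subnKC.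
have h' : Pf n n = Pf n (n - m) * Pf m m.
  by have := Pf_split n (n - m) m; rewrite subnK // subKn.
apply/eqP; rewrite -(eqn_pmul2r (Pf_gt0 (leqnn m))) -h' mulnAC qbP -h //.
Qed.

Lemma qbinomE n m : qbinom q n m = qb n m.
Proof.
rewrite /qbinom; case: leqP => mn; last by rewrite qb_eq0.
have -> : \prod_(i < m) (q ^ i.+1 - 1) = Pf m m.
  rewrite /Pf (reindex_inj rev_ord_inj) /=; apply: eq_bigr => i _.
  congr (_ ^ _ - 1); have := ltn_ord i; lia.
by rewrite -/(Pf n m) -qbP mulnK // Pf_gt0.
Qed.

Lemma Lf_QP n d m : Lf n d m = Qf d m * Pf (n - d) m.
Proof.
rewrite /Lf /Qf /Pf -big_split /=; apply: eq_bigr => i _.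
case: (leqP n (d + i)) => h.
  have -> : n - d - i = 0 by lia.
  by rewrite subnn muln0; apply/eqP; rewrite subn_eq0 leq_exp2l.
rewrite mulnBr muln1 -expnD; congr (_ - _); congr (_ ^ _); lia.
Qed.

Lemma Qf_shift d e m : Qf (e + d) m = q ^ (m * e) * Qf d m.
Proof.
rewrite /Qf (eq_bigr (fun t : 'I_m => q ^ e * q ^ (d + (t : nat)))); last first.
  by move=> i _; rewrite -expnD addnA.
by rewrite big_split /= prod_nat_const card_ord -expnM (mulnC e).
Qed.

Lemma Qf0 d : Qf d 0 = 1. Proof. by rewrite /Qf big_ord0. Qed.

Lemma main_arith k s j : s <= k -> 1 <= j <= s ->
  Lf (k - s) 0 j * Lf k (k - s + 1) (s - j) =
  (q ^ ((s - j) * (k + 1 - j - s)) * qb (s - 1) (j - 1) * qb (k - s) j)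
  * (Lf j 0 j * Lf s j (s - j)).
Proof.
move=> sk /andP[j1 js].
rewrite !Lf_QP !subn0.
case: (leqP j (k - s)) => jn; last first.
  by rewrite (Pf_eq0 jn) (qb_eq0 jn) !(mul0n, muln0).
have -> : k - (k - s + 1) = s - 1 by lia.
have -> : k - s + 1 = (k + 1 - j - s) + j by lia.
rewrite Qf_shift.
have e1 := qbP (k - s) j.
have e2 := qbP2 (n := s - 1) (m := j - 1) ltac:(lia).
rewrite (_ : s - 1 - (j - 1) = s - j) in e2; last lia.
rewrite -e1 -e2 mulnC.
set A := Qf 0 j; set B := Qf j (s - j); set C := Pf j j; set D := Pf (s - j) (s - j).
set E := q ^ _; set G := qb _ _; set H := qb _ _.
rewrite mulnC.
ring.
Qed.

End QArith.
Import GRing.Theory.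

Lemma card_sum (T : finType) (P : pred T) : #|[set x | P x]| = \sum_x (P x : nat).
Proof.
by rewrite -sum1_card big_mkcond /=; apply: eq_bigr => x _; rewrite inE; case: (P x).
Qed.

Lemma card_tuple_cons (T : finType) m (P : pred (m.+1.-tuple T)) :
  #|[set t | P t]| = \sum_(t : m.-tuple T) #|[set x | P [tuple of x :: t]]|.
Proof.
under [RHS]eq_bigr => t _ do rewrite (card_sum (fun x => P [tuple of x :: t])).
rewrite card_sum.
rewrite exchange_big pair_big /=.
pose f (p : T * m.-tuple T) := [tuple of p.1 :: p.2].
have fK : cancel f (fun t => (thead t, [tuple of behead t])).
  by case=> x t; congr pair; apply: val_inj.
have Kf : cancel (fun t : m.+1.-tuple T => (thead t, [tuple of behead t])) f.
  by move=> t; apply: val_inj => /=; case/tupleP: t => x t.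
rewrite (reindex f) /=; last by exists (fun t => (thead t, [tuple of behead t])) => ? _.
by [].
Qed.

Section Lin.
Variables (F : finFieldType) (k : nat).
Local Notation vT := 'rV[F]_k.
Local Notation q := #|F|.

Lemma card_vs (U : {vspace vT}) : #|[set x | x \in U]| = q ^ \dim U.
Proof. by rewrite cardsE card_vspace. Qed.

Lemma card_vs_diff (U E : {vspace vT}) : (U <= E)%VS ->
  #|[set x | (x \in E) && (x \notin U)]| = q ^ \dim E - q ^ \dim U.
Proof.
move=> UE.
have -> : [set x | (x \in E) && (x \notin U)] = [set x | x \in E] :\: [set x | x \in U].
  by apply/setP => x; rewrite !inE andbC.
rewrite cardsD !card_vs; congr (_ - _).
have -> : [set x | x \in E] :&: [set x | x \in U] = [set x | x \in U].
  apply/setP => x; rewrite !inE; apply/andP/idP => [[] //|xU]; split => //.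
  exact: (subvP UE).
by rewrite card_vs.
Qed.

Lemma dim_addline (U : {vspace vT}) x : \dim (U + <[x]>) = \dim U + (x \notin U).
Proof.
case: (boolP (x \in U)) => xU /=.
  by rewrite addn0; congr (\dim _); apply/addv_idPl; rewrite -memvE.
apply/eqP; rewrite eqn_leq; apply/andP; split.
  apply: leq_trans (dimv_add_leqif _ _) _; rewrite leq_add2l dim_vline; by case: (x != 0%R).
rewrite addn1; have := dimv_leqif_sup (addvSl U <[x]>).
case=> le eqiff; rewrite ltn_neqAle le andbT eqiff.
apply/negP => /subvP /(_ x).
have := memv_add (mem0v U) (memv_line x); rewrite add0r => h /(_ h).
by rewrite (negPf xU).
Qed.

Definition goodT (D E : {vspace vT}) m (t : m.-tuple vT) :=
  all (fun x => x \in E) t && (\dim (D + <<t>>) == \dim D + m).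

Lemma count_good (D E : {vspace vT}) m : (D <= E)%VS ->
  #|[set t : m.-tuple vT | goodT D E t]| =
  \prod_(i < m) (q ^ \dim E - q ^ (\dim D + i)).
Proof.
move=> DE; elim: m => [|m IH].
  rewrite big_ord0 (_ : [set t | _] = setT); first by rewrite cardsT card_tuple expn0.
  apply/setP => t.
  by rewrite !inE tuple0 /goodT /= span_nil addv0 addn0 eqxx.
rewrite card_tuple_cons big_ord_recr /= -IH card_sum big_distrl /=.
apply: eq_bigr => t _.
set U := (D + <<t>>)%VS.
have dU : \dim U <= \dim D + m.
  apply: leq_trans (dimv_add_leqif _ _) _; rewrite leq_add2l.
  by have := dim_span t; rewrite size_tuple.
have UE : (U <= E)%VS -> True by [].
have -> : [set x | goodT D E [tuple of x :: t]] =
          [set x | goodT D E t && ((x \in E) && (x \notin U))].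
  apply/setP => x; rewrite !inE /goodT /= span_cons addvA (addvC D) -addvA -/U.
  rewrite addvC dim_addline.
  case: (x \in E); case: (x \notin U); rewrite /= ?andbF ?andbT ?addn0 ?addn1 //.
  - by rewrite addnS eqSS.
  - have -> : (\dim U == \dim D + m.+1) = false by apply/eqP; lia.
    by rewrite andbF.
case: (boolP (goodT D E t)) => gt; last first.
  by rewrite mul0n; apply/eqP; rewrite cards_eq0; apply/eqP/setP => x; rewrite !inE.
rewrite mul1n (_ : [set x | true & _] = [set x | (x \in E) && (x \notin U)]); last first.
  by apply/setP => x; rewrite !inE.
rewrite card_vs_diff.
  by case/andP: gt => _ /eqP ->.
case/andP: gt => /allP tE _; rewrite subv_add DE /=; apply/span_subvP => x /tE //.
Qed.

End Lin.


Section Sets.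
Variables (F : finFieldType) (k : nat).
Local Notation vT := 'rV[F]_k.

Definition setv (U : {vspace vT}) : {set vT} := [set x | x \in U].
Definition spS (S : {set vT}) : {vspace vT} := <<enum S>>%VS.

Lemma spS_setv U : spS (setv U) = U.
Proof.
apply/eqP; rewrite eqEsubv; apply/andP; split.
  by apply/span_subvP => x; rewrite mem_enum inE.
by apply/subvP => x xU; apply: memv_span; rewrite mem_enum inE.
Qed.

Lemma setv_inj : injective setv.
Proof. by move=> U1 U2 e; rewrite -(spS_setv U1) e spS_setv. Qed.

Lemma lin_setv U : is_lin_subspace (setv U).
Proof.
rewrite /is_lin_subspace inE mem0v /=.
apply/forall_inP => u; rewrite inE => uU; apply/forall_inP => v; rewrite inE => vU.
by apply/forallP => c; rewrite inE memvD // memvZ.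
Qed.

Lemma lin_mem S : is_lin_subspace S -> forall x, (x \in spS S) = (x \in S).
Proof.
case/andP => S0 /forall_inP Scl.
have hZD c u v : u \in S -> v \in S -> (c *: u + v)%R \in S.
  by move=> uS vS; move/forall_inP: (Scl u uS) => /(_ v vS) /forallP.
have hsp X : all (fun x => x \in S) X -> forall x, x \in <<X>>%VS -> x \in S.
  elim: X => [|y X IH] /=.
    by move=> _ x; rewrite span_nil memv0 => /eqP ->.
  case/andP => yS XS x; rewrite span_cons => /memv_addP [w /vlineP [c ->] [z zX ->]].
  by apply: hZD => //; apply: IH.
move=> x; apply/idP/idP.
  by apply: hsp; apply/allP => y; rewrite mem_enum.
by move=> xS; apply: memv_span; rewrite mem_enum.
Qed.

Lemma setv_spS S : is_lin_subspace S -> setv (spS S) = S.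
Proof. by move=> hS; apply/setP => x; rewrite inE lin_mem. Qed.

End Sets.

Section Main.
Variables (F : finFieldType) (k s : nat) (a : 'rV[F]_k) (V : {vspace 'rV[F]_k}).
Hypotheses (sk : s <= k) (dimV : \dim V = k - s) (aV : a \notin V).
Local Notation vT := 'rV[F]_k.
Local Notation q := #|F|.
Local Notation W := (V + <[a]>)%VS.

Lemma disj_iff U : [disjoint setv U & affine_set a V] = (U :&: W <= V)%VS.
Proof.
apply/idP/idP.
  move=> dis; apply/subvP => x /memv_capP [xU /memv_addP [v vV [w /vlineP [c ->] xE]]].
  rewrite xE in xU *.
  case: (eqVneq c 0%R) => [->|cn0]; first by rewrite scale0r addr0.
  have hx : (c^-1 *: (v + c *: a))%R \in affine_set a V.
    by rewrite inE scalerDr scalerA mulVf // scale1r addrK memvZ.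
  have hU : (c^-1 *: (v + c *: a))%R \in setv U by rewrite inE memvZ.
  by rewrite (disjointFr dis hU) in hx.
move=> sub; rewrite disjoint_subset; apply/subsetP => x; rewrite !inE => xU.
apply/negP => xaV.
have xW : x \in W by rewrite -(subrK a x) memv_add // memv_line.
have xV : x \in V by apply: (subvP sub); rewrite memv_cap xU.
by move: aV; rewrite -(subKr x a) memvB.
Qed.

Definition goodS (U : {vspace vT}) := (\dim U == s) && (U :&: W <= V)%VS.

Definition nset := [set S : {set vT} | is_lin_subspace S && (set_dim S == s)
        && [disjoint S & affine_set a V]].

Lemma nset_iff S : (S \in nset) = is_lin_subspace S && goodS (spS S).
Proof.
rewrite inE; case: (boolP (is_lin_subspace S)) => //= hS.
by rewrite /goodS -disj_iff setv_spS.
Qed.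

Definition Tj j := [set p : j.-tuple vT * (s - j).-tuple vT |
   goodT 0%VS V p.1 && goodT W fullv p.2].
Definition phi j (p : j.-tuple vT * (s - j).-tuple vT) := setv (<<p.1>> + <<p.2>>)%VS.
Definition Pj j := [set S in nset | \dim (spS S :&: V) == j].

Lemma claim1 j (u : j.-tuple vT) (y : (s - j).-tuple vT) : j <= s ->
  goodT 0%VS V u -> goodT W fullv y ->
  [/\ \dim (<<u>> + <<y>>) = s, ((<<u>> + <<y>>) :&: W <= <<u>>)%VS,
      (<<u>> <= V)%VS & \dim <<u>> = j]%VS.
Proof.
move=> js /andP [/allP uV /eqP] ; rewrite add0v dimv0 add0n => du.
case/andP => _ /eqP dWy.
have uV' : (<<u>> <= V)%VS by apply/span_subvP.
have dy : \dim <<y>> <= s - j by have := dim_span y; rewrite size_tuple.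
have h := dimv_sum_cap W <<y>>; rewrite dWy in h.
have dWY : \dim (W :&: <<y>>) = 0.
  move: h dy; set A := \dim W; set B := \dim <<y>>; set C := \dim (W :&: <<y>>). lia.
have dY : \dim <<y>> = s - j.
  move: h dy dWY; set A := \dim W; set B := \dim <<y>>; set C := \dim (W :&: <<y>>). lia.
have WY0 : (W :&: <<y>> = 0)%VS by apply/eqP; rewrite -dimv_eq0 dWY.
have uW : (<<u>> <= W)%VS := subv_trans uV' (addvSl _ _).
split => //.
- rewrite dimv_disjoint_sum ?du ?dY; first lia.
  by apply/eqP; rewrite -subv0 -WY0; apply: capvS uW (subvv _).
- apply/subvP => x /memv_capP [/memv_addP [u' u'U [y' y'Y ->]] xW].
  have y'W : y' \in W.
    by rewrite -(addKr u' y') memvD // rpredN (subvP uW).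
  have : y' \in (W :&: <<y>>)%VS by rewrite memv_cap y'W.
  by rewrite WY0 memv0 => /eqP ->; rewrite addr0.
Qed.

Lemma claim1b j (u : j.-tuple vT) (y : (s - j).-tuple vT) : j <= s ->
  goodT 0%VS V u -> goodT W fullv y ->
  goodS (<<u>> + <<y>>)%VS /\ ((<<u>> + <<y>>) :&: V = <<u>>)%VS.
Proof.
move=> js gu gy; have [d1 sub uV du] := claim1 js gu gy.
split.
  by rewrite /goodS d1 eqxx /=; apply: subv_trans sub uV.
apply/eqP; rewrite eqEsubv; apply/andP; split.
  by apply: subv_trans sub; apply: capvS (subvv _) (addvSl _ _).
by rewrite subv_cap addvSl uV.
Qed.

Lemma phi_in j p : j <= s -> p \in Tj j -> phi p \in Pj j.
Proof.
case: p => u y js; rewrite inE /= => /andP [gu gy].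
have [gS eC] := claim1b js gu gy.
have [_ _ _ du] := claim1 js gu gy.
rewrite /Pj /phi inE nset_iff spS_setv lin_setv gS /= eC du.
by [].
Qed.

Lemma fiber j S : j <= s -> S \in Pj j ->
  #|[set p in Tj j | phi p == S]| = Lf q j 0 j * Lf q s j (s - j).
Proof.
move=> js; rewrite inE nset_iff => /andP [/andP [hS /andP [/eqP dU sub]] /eqP dC].
set U := spS S in dU sub dC.
set C := (U :&: V)%VS in dC.
have dC' : \dim C = j by [].
have SU : S = setv U by rewrite setv_spS.
have CV : (C <= V)%VS := capvSr _ _.
have CU : (C <= U)%VS := capvSl _ _.
have -> : [set p in Tj j | phi p == S] =
          setX [set u | goodT 0%VS C u] [set y | goodT C U y].
  apply/setP => -[u y]; rewrite !inE /= /phi SU (inj_eq (@setv_inj _ _)).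
  apply/idP/idP.
    case/andP => [/andP [gu gy] /eqP eU]; rewrite /= in eU.
    have [gS eC] := claim1b js gu gy.
    have [d1 _ _ du] := claim1 js gu gy.
    have eC' : C = <<u>>%VS by rewrite /C -eU eC.
    apply/andP; split.
      apply/andP; split; last by case/andP: gu.
      by apply/allP => x xu; rewrite eC' memv_span.
    apply/andP; split.
      apply/allP => x xy; rewrite -eU; apply: (subvP (addvSr _ _)).
      exact: memv_span.
    by rewrite eC' eU dU du subnKC.
  case/andP => [/andP [/allP uC /eqP]]; rewrite add0v dimv0 add0n => du.
  case/andP => [/allP yU /eqP dCy].
  have uCs : (<<u>> <= C)%VS by apply/span_subvP.
  have eC : <<u>>%VS = C.
    by apply/eqP; rewrite eqEdim uCs; apply: eq_leq; rewrite du.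
  have yUs : (<<y>> <= U)%VS by apply/span_subvP.
  have eU : (C + <<y>>)%VS = U.
    by apply/eqP; rewrite eqEdim subv_add CU yUs dU dCy /=; apply: eq_leq; rewrite dC' subnKC.
  rewrite -eC in eU; rewrite eU eqxx andbT.
  apply/andP; split.
    apply/andP; split; last by rewrite add0v dimv0 add0n du.
    by apply/allP => x /uC; apply: (subvP CV).
  apply/andP; split; first by apply/allP => x _; rewrite memvf.
  have dy : \dim <<y>> <= s - j by have := dim_span y; rewrite size_tuple.
  have h := dimv_sum_cap C <<y>>; rewrite dCy in h.
  have dCY : \dim (C :&: <<y>>) = 0.
    move: h dy; set A := \dim C; set B := \dim <<y>>; set D := \dim (C :&: <<y>>). lia.
  have dY : \dim <<y>> = s - j.
    move: h dy dCY; set A := \dim C; set B := \dim <<y>>; set D := \dim (C :&: <<y>>). lia.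
  have CY0 : (C :&: <<y>> = 0)%VS by apply/eqP; rewrite -dimv_eq0 dCY.
  have WY0 : (W :&: <<y>> = 0)%VS.
    apply/eqP; rewrite -subv0; apply/subvP => x /memv_capP [xW xY].
    have xU : x \in U := subvP yUs x xY.
    have xV : x \in V by apply: (subvP sub); rewrite memv_cap xU.
    by rewrite -CY0 memv_cap memv_cap xU xV.
  by rewrite dimv_disjoint_sum // dY.
rewrite cardsX !count_good ?sub0v // dimv0 dU dC'. by [].
Qed.

Lemma dimW : \dim W = k - s + 1.
Proof. by rewrite dim_addline dimV aV. Qed.

Lemma card_Tj j : #|Tj j| = Lf q (k - s) 0 j * Lf q k (k - s + 1) (s - j).
Proof.
have -> : Tj j = setX [set u | goodT 0%VS V u] [set y | goodT W fullv y].
  by apply/setP => -[u y]; rewrite !inE.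
rewrite cardsX !count_good ?sub0v ?subvf // dimv0 dimV dimvf dimW.
by rewrite /dim /= mul1n.
Qed.

Lemma Pj_card j : j <= s -> #|Pj j| * (Lf q j 0 j * Lf q s j (s - j)) = #|Tj j|.
Proof.
move=> js.
rewrite -[in RHS]sum1_card (partition_big (@phi j) (mem (Pj j))) /=; last first.
  by move=> p; apply: phi_in.
rewrite -sum_nat_const; apply: eq_bigr => S SP.
by rewrite sum1dep_card -(fiber js SP); congr #|_|; apply/setP => p; rewrite !inE.
Qed.

Lemma nset_split : #|nset| = \sum_(j < s.+1) #|Pj j|.
Proof.
rewrite -sum1_card (partition_big (fun S => inord (\dim (spS S :&: V)) : 'I_s.+1) xpredT) //=.
apply: eq_bigr => j _; rewrite sum1dep_card; apply: eq_card => S; rewrite !inE.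
have le : S \in nset -> \dim (spS S :&: V) <= s.
  rewrite nset_iff => /andP [_ /andP [/eqP <- _]].
  exact: dimvS (capvSl _ _).
apply/andP/andP => -[hS e]; split => //; have hS' : S \in nset by rewrite inE.
  by move: e; rewrite -(inj_eq val_inj) /= inordK // ltnS le.
by rewrite -(inj_eq val_inj) /= inordK // ltnS le.
Qed.

End Main.

Theorem lemma2p6 (F : finFieldType) (k s : nat) (a : 'rV[F]_k)
  (V : {vspace 'rV[F]_k}) :
  s <= k -> \dim V = k - s -> a \notin V ->
  n_count s a V =
  \sum_(1 <= i < s.+1)
     #|F| ^ ((s - i) * (k + 1 - i - s)) * qbinom #|F| (s - 1) (i - 1)
       * qbinom #|F| (k - s) i.
Proof.
move=> sk dV aV.
have q1 : 1 < #|F| := card_finNzRing_gt1 F.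
have s1 : 0 < s.
  move: sk dV; case: s => // _; rewrite subn0 => dV'; exfalso; move: aV.
  have -> : V = fullv.
    by apply/eqP; rewrite eqEdim subvf dimvf /dim /= mul1n dV' leqnn.
  by rewrite memvf.
have c_pos j : j <= s -> 0 < Lf #|F| j 0 j * Lf #|F| s j (s - j).
  move=> js; rewrite !Lf_QP // subn0 muln_gt0 !muln_gt0.
  rewrite !Pf_gt0 // ?andbT; apply/andP; split; apply/prodn_gt0 => i; exact: expq_gt0.
rewrite (_ : n_count s a V = #|nset s a V|) //.
rewrite nset_split // big_ord_recl /=.
have -> : #|Pj s a V 0| = 0.
  have := Pj_card sk dV aV (leq0n s); rewrite card_Tj //.
  rewrite [Lf _ k _ _]Lf_QP // (_ : k - (k - s + 1) = s - 1); last lia.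
  rewrite subn0 Pf_eq0 ?muln0; last lia.
  have := c_pos 0 (leq0n s); rewrite subn0 => cp.
  by move/eqP; rewrite muln_eq0 (gtn_eqF cp) orbF => /eqP.
rewrite add0n big_add1 /= big_mkord; apply: eq_bigr => i _.
have := Pj_card sk dV aV (ltn_ord i); rewrite card_Tj // main_arith //; last first.
  by rewrite /= ltn_ord.
move/eqP; rewrite eqn_pmul2r ?c_pos ?(ltn_ord i) // => /eqP ->.
by rewrite !qbinomE.
Qed.
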